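(* Let $\kappa$ be a regular uncountable cardinal with $\kappa^{<\kappa}=\kappa$ and $\gamma^\omega<\kappa$ for all $\gamma<\kappa$, and let $I^i$, $I^i_\alpha$ be as in the context. For every $i<\kappa$, every limit ordinal $\delta<\kappa$ and every $\nu\in I^i$ there is $\beta<\delta$ such that for every $\sigma\in I^i_\delta$ with $\sigma>\nu$ there is $\sigma'\in I^i_\beta$ with $\sigma\ge\sigma'\ge\nu$.
   Context: $I^0$: order $\kappa\times\mathbb Q$ lexicographically; $I^0$ is the set of $f:\omega\to\kappa\times\mathbb Q$, $f(n)=(f_1(n),f_2(n))$, with $\{n\mid f_1(n)\ne0\}$ finite, ordered by comparing at the least $n$ where they differ. Construct linear orders $I^0\subseteq I^1\subseteq\dots\subseteq I^i\subseteq\dots$ ($i<\kappa$): given $I^i$, for each $\nu\in I^i$ add a new element $\nu^{i+1}$ realizing $tp_{bs}(\nu,I^i\setminus\{\nu\},I^i)\cup\{x<\nu\}$, i.e. $\nu^{i+1}<\nu$ and for every $\tau\in I^i\setminus\{\nu\}$, $\tau<\nu^{i+1}$ iff $\tau<\nu$ (for distinct $\nu,\mu$, $\nu^{i+1}<\mu^{i+1}$ iff $\nu<\mu$); $I^{i+1}=I^i\cup\{\nu^{i+1}\mid\nu\in I^i\}$; at limits $I^i=\bigcup_{j<i}I^j$. Representations: $I^0_\alpha=\{\nu\in I^0\mid \nu_1(n)<\alpha\text{ for all }n<\omega\}$; $I^{i+1}_\alpha=I^i_\alpha\cup\{\nu^{i+1}\mid\nu\in I^i_\alpha\}$; for limit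 $i$, $I^i_\alpha=\bigcup_{j<i}I^j_\alpha$. *)

(* Defs.v *)
From mathcomp Require Import all_boot all_order all_algebra.
Import Order.TTheory GRing.Theory Num.Theory.

(* The cardinal kappa is represented by a type K with a strict well-order ltK
   of order type kappa (K = the set of ordinals < kappa); k0 is its least
   element (the ordinal 0). *)
Section Kappa.
Variables (K : Type) (ltK : K -> K -> Prop) (k0 : K).

Definition strict_well_order : Prop :=
  [/\ (forall x, ~ ltK x x),
      (forall x y z, ltK x y -> ltK y z -> ltK x z),
      (forall x y, ltK x y \/ x = y \/ ltK y x)
    & well_founded ltK].

Definition is_least : Prop := forall x, ~ ltK x k0.

(* |S| < kappa : there is no injection of K into S *)
Definition small (S : K -> Prop) : Prop :=
  ~ exists f : K -> K, (forall k, S (f k)) /\ (forall a b, f a = f b -> a = b).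

(* kappa is a cardinal (initial ordinal): every proper initial segment is small *)
Definition is_cardinal : Prop := forall x, small (fun y => ltK y x).

Definition uncountable : Prop :=
  ~ exists f : K -> nat, forall a b, f a = f b -> a = b.

Definition regular : Prop :=
  forall S : K -> Prop, small S -> exists b, forall s, S s -> ltK s b.

(* kappa^{<kappa} = kappa: for every gamma < kappa, kappa^gamma <= kappa,
   i.e. functions gamma -> K (modulo equality on gamma) inject into K *)
Definition pow_lt_kappa : Prop :=
  forall gamma : K, exists G : (K -> K) -> K,
    forall g h, G g = G h -> forall y, ltK y gamma -> g y = h y.

Definition omega_pow_small : Prop :=
  forall gamma : K, ~ exists F : K -> nat -> K,
    (forall k n, ltK (F k n) gamma) /\
    (forall a b, (forall n, F a n = F b n) -> a = b).

Definition is_limit (d : K) : Prop :=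
  d <> k0 /\ forall x, ltK x d -> exists y, ltK x y /\ ltK y d.

Definition lexKQ (x y : K * rat) : Prop :=
  ltK x.1 y.1 \/ (x.1 = y.1 /\ (x.2 < y.2)%R).

Definition fin_supp (f : nat -> K * rat) : Prop :=
  exists N, forall n, (N <= n)%N -> (f n).1 = k0.

Definition baselt (f g : nat -> K * rat) : Prop :=
  exists n, (forall m, (m < n)%N -> f m = g m) /\ lexKQ (f n) (g n).

(* An element of I^i is nu^{j_1+1 ... j_k+1}: a base nu in I^0 to which the
   successive operations "add nu^{j+1}" were applied at stages
   j_1 + 1, ..., j_k + 1 with j_1 < ... < j_k < i. *)
Record elt := Elt { base : nat -> K * rat; stages : list K }.

Fixpoint incr (l : list K) : Prop :=
  match l with
  | a :: ((b :: _) as l') => ltK a b /\ incr l'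
  | _ => True
  end.

Fixpoint all_below (i : K) (l : list K) : Prop :=
  match l with
  | [::] => True
  | a :: l' => ltK a i /\ all_below i l'
  end.

(* order between the stage lists of two elements with the same base:
   nu^{j+1} lies immediately below nu (below nu, above everything of I^j
   below nu), so the list with the smaller entry at the first difference is
   smaller, and a proper extension of a list is smaller than the list *)
Fixpoint stlt (l m : list K) : Prop :=
  match l, m with
  | [::], _ => False
  | _ :: _, [::] => True
  | a :: l', b :: m' => ltK a b \/ (a = b /\ stlt l' m')
  end.

Definition eltlt (x y : elt) : Prop :=
  baselt (base x) (base y) \/
  ((forall n, base x n = base y n) /\ stlt (stages x) (stages y)).

Definition elt_eq (x y : elt) : Prop :=
  (forall n, base x n = base y n) /\ stages x = stages y.

Definition eltle (x y : elt) : Prop := eltlt x y \/ elt_eq x y.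

Definition inI (i : K) (x : elt) : Prop :=
  [/\ fin_supp (base x), incr (stages x) & all_below i (stages x)].

Definition inIa (i alpha : K) (x : elt) : Prop :=
  inI i x /\ forall n, ltK (base x n).1 alpha.

End Kappa.

(* Main.v *)
Require Import Defs.
From mathcomp Require Import all_boot all_order all_algebra.
From mathcomp Require Import lra.
From Stdlib Require Import Classical.
Import Order.TTheory GRing.Theory Num.Theory.
Arguments base {K}.
Arguments stages {K}.
Arguments lexKQ {K}.
Local Open Scope ring_scope.

Lemma bound_lemma (K : Type) (ltK : K -> K -> Prop) (k0 : K)
  (Hwo : @strict_well_order K ltK) (delta : K) (Hl : @is_limit K ltK k0 delta)
  (Hkd : ltK k0 delta) (f : nat -> K) :
  forall N, exists b, ltK b delta /\ ltK k0 b /\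
     forall k, (k < N)%N -> ltK (f k) delta -> ltK (f k) b.
Proof.
case: Hwo => Hirr Htr Htri _.
elim=> [|N [b [Hb1 [Hb2 Hb3]]]].
  have [y [Hy1 Hy2]] := (proj2 Hl) k0 Hkd.
  by exists y; split => //; split => // k.
case: (classic (ltK (f N) delta)) => HN; last first.
  exists b; split => //; split => // k; rewrite ltnS leq_eqVlt.
  case/orP => [/eqP -> //|]; exact: Hb3.
have [c [Hc1 [Hbc Hfc]]] : exists c, ltK c delta /\ (b = c \/ ltK b c) /\ (f N = c \/ ltK (f N) c).
  case: (Htri b (f N)) => [H|[H|H]].
  - by exists (f N); split => //; split; [right|left].
  - by exists (f N); split => //; split; left.
  - by exists b; split => //; split; [left|right].
have [y [Hy1 Hy2]] := (proj2 Hl) c Hc1.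
have Hby : ltK b y by case: Hbc => [->|H]; [|apply: Htr H Hy1].
exists y; split => //; split; first by apply: Htr Hb2 Hby.
move=> k; rewrite ltnS leq_eqVlt; case/orP => [/eqP -> _|Hk Hfk].
  by case: Hfc => [->|H]; [|apply: Htr H Hy1].
by apply: Htr (Hb3 k Hk Hfk) Hby.
Qed.

Theorem mainTheorem10 (K : Type) (ltK : K -> K -> Prop) (k0 : K)
  (Hwo : @strict_well_order K ltK) (Hk0 : @is_least K ltK k0)
  (Hcard : @is_cardinal K ltK) (Hunc : @uncountable K) (Hreg : @regular K ltK)
  (Hpow : @pow_lt_kappa K ltK) (Homega : @omega_pow_small K ltK) :
  forall (i delta : K), @is_limit K ltK k0 delta ->
  forall nu : elt K, @inI K ltK k0 i nu ->
  exists beta : K, ltK beta delta /\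
    forall sigma : elt K, @inIa K ltK k0 i delta sigma -> @eltlt K ltK nu sigma ->
    exists sigma' : elt K, @inIa K ltK k0 i beta sigma' /\
      @eltle K ltK sigma' sigma /\ @eltle K ltK nu sigma'.
Proof.
move=> i delta Hl nu Hnu.
have Hwo' := Hwo; case: Hwo' => Hirr Htr Htri _.
have Hkd : ltK k0 delta.
  case: (Htri k0 delta) => [//|[H|H]]; first by case: (proj1 Hl).
  by case: (Hk0 _ H).
have Hnu' := Hnu; case: Hnu' => [[N HN] _ _].
have [beta [Hb1 [Hb2 Hb3]]] :=
  @bound_lemma K ltK k0 Hwo delta Hl Hkd (fun k => (base nu k).1) N.
have Hbeta : forall k, ltK (base nu k).1 delta -> ltK (base nu k).1 beta.
  move=> k Hk; case: (ltnP k N) => HkN; first exact: Hb3.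
  by rewrite (HN k HkN).
exists beta; split => // sigma [Hs Hsd] Hlt.
case: (classic (forall k, ltK (base nu k).1 delta)) => Hall.
  exists nu; split; first by split => // n; apply: Hbeta.
  by split; [left|right].
have [n Hn] := not_all_ex_not _ _ Hall.
case: Hlt => [[m [Hm1 Hm2]]|[Heq _]]; last by exfalso; apply: Hn; rewrite Heq.
have Hlm : ltK (base nu m).1 beta.
  apply: Hbeta; case: Hm2 => [H|[-> _]]; last exact: Hsd.
  exact: Htr H (Hsd m).
have [q [Hq1 Hq2]] : exists q : rat, (base nu m).2 < q /\
    lexKQ ltK ((base nu m).1, q) (base sigma m).
  case: Hm2 => [H|[He H]].
    by exists ((base nu m).2 + 1); split; [lra|left].
  exists (((base nu m).2 + (base sigma m).2) / 2); split; first lra.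
  by right; split => //=; lra.
pose b' := fun k => if (k < m)%N then base nu k
                    else if k == m then ((base nu m).1, q) else (k0, 0%R).
exists (@Elt K b' [::]); split; first split.
- split => //; exists m.+1 => k Hk; rewrite /b' /=.
  by rewrite ltnNge ltnW //= gtn_eqF.
- move=> k; rewrite /b' /=; case: ltnP => Hk.
    by apply: Hbeta; rewrite Hm1 //; apply: Hsd.
  by case: eqP.
- split; left; left; exists m; rewrite /b' /= ltnn eqxx; split.
  + by move=> k Hk; rewrite Hk Hm1.
  + exact: Hq2.
  + by move=> k Hk; rewrite Hk.
  + by right; split.
Qed.
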